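(* Let $d_1,d_2,d_3\in\mathbb{R}^2$ be unit vectors with $d_2=R(-\theta_{12})d_1$, $d_3=R(\theta_{13})d_1$, where $0<\theta_{12},\theta_{13}<\pi$ and $\theta_{12}+\theta_{13}\ge\pi$. Let $s\in\mathbb{C}$ with $\mathrm{Re}(s)>0$. Suppose $X^1,X^2,X^3:[0,\infty)\to\mathbb{C}^2$ are bounded smooth functions satisfying on $(0,\infty)$ $$sX^1\cdot d_1^\perp=X^1_{\sigma\sigma}\cdot d_1^\perp,\quad d_1\cdot X^1_{\sigma\sigma}=0,$$ $$sX^j\cdot d_j^\perp=-X^j_{\sigma\sigma\sigma\sigma}\cdot d_j^\perp,\quad d_j\cdot X^j_{\sigma\sigma}=0\qquad(j=2,3),$$ and the eight scalar conditions at $\sigma=0$: (i) $X^1(0)=X^2(0)=X^3(0)$; (ii) $d_1\cdot X^j_\sigma+d_j\cdot X^1_\sigma-(d_1\cdot d_j)(d_1\cdot X^1_\sigma+d_j\cdot X^j_\sigma)=0$ for $j=2,3$; (iii) $X^2_{\sigma\sigma}\cdot d_2^\perp=-X^3_{\sigma\sigma}\cdot d_3^\perp$; (iv) $X^2_{\sigma\sigma\sigma}\cdot d_2^\perp=X^3_{\sigma\sigma\sigma}\cdot d_3^\perp$. Then $X^1\equiv X^2\equiv X^3\equiv0$.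
   Context: $R(\varphi)$ denotes counterclockwise rotation by $\varphi$ and $d^\perp=R(\pi/2)d$; the dot product on $\mathbb{C}^2$ is bilinear. This is the Laplace-transformed (zero initial data) linearization, around straight rays with directions $d_1$ (grain boundary) and $d_2,d_3$ (exterior surface branches) meeting at a triple junction at $\sigma=0$, of the partial differential algebraic system $X^1_t\cdot\vec n-\kappa=0$, $X^j_t\cdot\vec n+\kappa_{ss}=0$ ($j=2,3$), $X^i_\sigma\cdot X^i_{\sigma\sigma}=0$ ($i=1,2,3$), with the linearized common-point, Young angle, curvature-continuity and mass-flux-balance junction conditions (no artificial tangential conditions). *)

(* Defs.v *)
From Stdlib Require Import Reals.
From Coquelicot Require Import Coquelicot.
Open Scope R_scope.

(* complex numbers (Coquelicot: Complex.C = R * R, real and imaginary part) *)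
Notation CC := Complex.C.

Definition vec2 := (R * R)%type.
Definition C2 := (CC * CC)%type.
Definition C2zero : C2 := (RtoC 0, RtoC 0).

Definition rot (phi : R) (d : vec2) : vec2 :=
  (cos phi * fst d - sin phi * snd d, sin phi * fst d + cos phi * snd d).
Definition perp (d : vec2) : vec2 := rot (PI / 2) d.

Definition rdot (u v : vec2) : R := fst u * fst v + snd u * snd v.

(* bilinear dot product on C^2, specialized to a real second argument
   (real vectors embedded into C^2) *)
Definition cdot (X : C2) (d : vec2) : CC :=
  (fst X * RtoC (fst d) + snd X * RtoC (snd d))%C.

Definition comps (X : R -> C2) : list (R -> R) :=
  (fun t => fst (fst (X t))) :: (fun t => snd (fst (X t))) ::
  (fun t => fst (snd (X t))) :: (fun t => snd (snd (X t))) :: nil.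

Definition Dn (n : nat) (X : R -> C2) (t : R) : C2 :=
  ((Derive_n (fun u => fst (fst (X u))) n t, Derive_n (fun u => snd (fst (X u))) n t),
   (Derive_n (fun u => fst (snd (X u))) n t, Derive_n (fun u => snd (snd (X u))) n t)).

Definition smooth (X : R -> C2) : Prop :=
  forall f, List.In f (comps X) -> forall n t, ex_derive_n f n t.

Definition bounded_on_halfline (X : R -> C2) : Prop :=
  exists M : R, forall t, 0 <= t -> Cmod (fst (X t)) <= M /\ Cmod (snd (X t)) <= M.

(* Main.v *)
Require Import Defs.
From Stdlib Require Import Reals Lra Psatz FunctionalExtensionality List.
From Coquelicot Require Import Coquelicot.
Open Scope R_scope.

Lemma isd_eq (f : R -> R) (x l l' : R) : is_derive f x l -> l = l' -> is_derive f x l'.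
Proof. intros H <-; exact H. Qed.

Definition hasD (f g : R -> C) := forall t,
  is_derive (fun x => Re (f x)) t (Re (g t)) /\ is_derive (fun x => Im (f x)) t (Im (g t)).

Lemma hasD_plus f f' g g' : hasD f f' -> hasD g g' ->
  hasD (fun t => (f t + g t)%C) (fun t => (f' t + g' t)%C).
Proof.
  intros Hf Hg t; destruct (Hf t) as [H1 H2]; destruct (Hg t) as [H3 H4]; split.
  - exact (is_derive_plus _ _ _ _ _ H1 H3).
  - exact (is_derive_plus _ _ _ _ _ H2 H4).
Qed.

Lemma hasD_minus f f' g g' : hasD f f' -> hasD g g' ->
  hasD (fun t => (f t - g t)%C) (fun t => (f' t - g' t)%C).
Proof.
  intros Hf Hg t; destruct (Hf t) as [H1 H2]; destruct (Hg t) as [H3 H4]; split.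
  - exact (is_derive_minus _ _ _ _ _ H1 H3).
  - exact (is_derive_minus _ _ _ _ _ H2 H4).
Qed.

Lemma hasD_mult f f' g g' : hasD f f' -> hasD g g' ->
  hasD (fun t => (f t * g t)%C) (fun t => (f' t * g t + f t * g' t)%C).
Proof.
  intros Hf Hg t; destruct (Hf t) as [H1 H2]; destruct (Hg t) as [H3 H4]; split.
  - pose proof (is_derive_mult _ _ _ _ _ H1 H3 Rmult_comm) as A.
    pose proof (is_derive_mult _ _ _ _ _ H2 H4 Rmult_comm) as B.
    eapply isd_eq. exact (is_derive_minus _ _ _ _ _ A B).
    unfold minus, plus, opp, mult, Re, Im, Cmult, Cplus, Cminus, Copp; simpl; ring.
  - pose proof (is_derive_mult _ _ _ _ _ H1 H4 Rmult_comm) as A.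
    pose proof (is_derive_mult _ _ _ _ _ H2 H3 Rmult_comm) as B.
    eapply isd_eq. exact (is_derive_plus _ _ _ _ _ A B).
    unfold minus, plus, opp, mult, Re, Im, Cmult, Cplus, Cminus, Copp; simpl; ring.
Qed.

Lemma hasD_const c : hasD (fun _ => c) (fun _ => 0%C).
Proof. intros t; split; (eapply isd_eq; [apply is_derive_const | reflexivity]). Qed.

Lemma hasD_cmul c f f' : hasD f f' -> hasD (fun t => (c * f t)%C) (fun t => (c * f' t)%C).
Proof.
  intros H.
  pose proof (hasD_mult _ _ _ _ (hasD_const c) H) as K.
  intros t; destruct (K t) as [K1 K2]; split; eapply isd_eq; eauto; unfold Re, Im, Cmult, Cplus; simpl; ring.
Qed.

Definition E (k : C) (t : R) : C :=
  (exp (Re k * t) * cos (Im k * t), exp (Re k * t) * sin (Im k * t)).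

Lemma E_0 k : E k 0 = 1%C.
Proof. unfold E. rewrite !Rmult_0_r, exp_0, cos_0, sin_0. unfold RtoC; f_equal; ring. Qed.

Lemma E_plus k t h : E k (t + h) = (E k t * E k h)%C.
Proof.
  unfold E, Cmult; simpl. rewrite !Rmult_plus_distr_l, exp_plus, cos_plus, sin_plus.
  f_equal; ring.
Qed.

Lemma E_inv k t : (E k t * E (-k) t)%C = 1%C.
Proof.
  unfold E, Cmult, Re, Im; simpl.
  replace (- fst k * t) with (- (fst k * t)) by ring.
  replace (- snd k * t) with (- (snd k * t)) by ring.
  rewrite cos_neg, sin_neg.
  assert (exp (fst k * t) * exp (- (fst k * t)) = 1).
  { rewrite <- exp_plus. replace (fst k * t + - (fst k * t)) with 0 by ring. apply exp_0. }
  pose proof (sin2_cos2 (snd k * t)). unfold Rsqr in *. unfold RtoC; f_equal; nra.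
Qed.

Lemma Cmod_E k t : Cmod (E k t) = exp (Re k * t).
Proof.
  unfold Cmod, E; simpl.
  pose proof (sin2_cos2 (Im k * t)). unfold Rsqr in *.
  replace (exp (Re k * t) * cos (Im k * t) * (exp (Re k * t) * cos (Im k * t) * 1) +
   exp (Re k * t) * sin (Im k * t) * (exp (Re k * t) * sin (Im k * t) * 1))
   with (exp (Re k * t) * exp (Re k * t)) by nra.
  apply sqrt_square. left; apply exp_pos.
Qed.

Lemma hasD_E k : hasD (E k) (fun t => (k * E k t)%C).
Proof.
  intros t; split; unfold E; simpl.
  - eapply isd_eq. auto_derive; auto. unfold Re, Im; ring.
  - eapply isd_eq. auto_derive; auto. unfold Re, Im; ring.
Qed.

Lemma C_eq (x y : C) : Re x = Re y -> Im x = Im y -> x = y.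
Proof. destruct x, y; unfold Re, Im; simpl; intros -> ->; reflexivity. Qed.

Lemma real_const (f f' : R -> R) : (forall t, is_derive f t (f' t)) ->
  (forall t, 0 < t -> f' t = 0) -> forall t, 0 <= t -> f t = f 0.
Proof.
  intros Hd H0 t Ht. destruct (Req_dec t 0) as [->|Hn]; [reflexivity|].
  destruct (MVT_cor2 f f' 0 t) as [c [Hc1 Hc2]]; [lra| |].
  - intros c _. apply is_derive_Reals, Hd.
  - rewrite H0 in Hc1 by lra. lra.
Qed.

Lemma const_lemma g g' : hasD g g' -> (forall t, 0 < t -> g' t = 0%C) ->
  forall t, 0 <= t -> g t = g 0.
Proof.
  intros Hd H0 t Ht. apply C_eq.
  - apply (real_const (fun x => Re (g x)) (fun x => Re (g' x))); auto.
    + intros s; apply Hd.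
    + intros s Hs; rewrite H0 by auto; reflexivity.
  - apply (real_const (fun x => Im (g x)) (fun x => Im (g' x))); auto.
    + intros s; apply Hd.
    + intros s Hs; rewrite H0 by auto; reflexivity.
Qed.

Lemma first_order f f' k : hasD f f' -> (forall t, 0 < t -> f' t = (k * f t)%C) ->
  f 0 = 0%C -> forall t, 0 <= t -> f t = 0%C.
Proof.
  intros Hd Hk H0 t Ht.
  pose proof (hasD_mult _ _ _ _ Hd (hasD_E (-k))) as Hm.
  assert (Hc := const_lemma _ _ Hm).
  assert (f t * E (-k) t = 0)%C.
  { rewrite Hc; auto. rewrite H0. ring.
    intros s Hs. rewrite Hk by auto. ring. }
  transitivity (f t * E (-k) t * E k t)%C.
  - rewrite <- Cmult_assoc, (Cmult_comm (E (-k) t)), E_inv. ring.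
  - rewrite H. ring.
Qed.

Definition chain (V : nat -> R -> C) := forall j, hasD (V j) (V (S j)).

Definition Tsh (r : C) (V : nat -> R -> C) : nat -> R -> C :=
  fun j t => (V (S j) t - r * V j t)%C.

Fixpoint Top (l : list C) (V : nat -> R -> C) : nat -> R -> C :=
  match l with nil => V | r :: l' => Top l' (Tsh r V) end.

Lemma chain_Tsh r V : chain V -> chain (Tsh r V).
Proof. intros H j. unfold Tsh. apply hasD_minus; [apply H| apply hasD_cmul, H]. Qed.

Lemma chain_Top l : forall V, chain V -> chain (Top l V).
Proof. induction l; simpl; auto. intros V H; apply IHl, chain_Tsh, H. Qed.

Lemma uniq l : forall V, chain V -> (forall t, 0 < t -> Top l V 0 t = 0%C) ->
  (forall j, (j < length l)%nat -> V j 0 = 0%C) -> forall t, 0 < t -> V 0%nat t = 0%C.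
Proof.
  induction l as [|r l IH]; simpl; intros V HV Ht Hj t Hpos; auto.
  assert (HW : forall t, 0 < t -> Tsh r V 0 t = 0%C).
  { apply IH; auto. apply chain_Tsh, HV.
    intros j Hjl. unfold Tsh. rewrite !Hj by lia. ring. }
  apply (first_order (V 0%nat) (V 1%nat) r (HV 0%nat)); [|apply Hj; lia|lra].
  intros s Hs. specialize (HW s Hs). unfold Tsh in HW.
  apply (f_equal (fun z => z + r * V 0%nat s)%C) in HW. ring_simplify in HW. rewrite HW. ring.
Qed.

Fixpoint cpow (z : C) (n : nat) : C := match n with O => 1%C | S n => (z * cpow z n)%C end.

Definition expch (a r : C) : nat -> R -> C := fun j t => (a * cpow r j * E r t)%C.

Lemma chain_expch a r : chain (expch a r).
Proof.
  intros j. unfold expch. 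
  pose proof (hasD_cmul (a * cpow r j) _ _ (hasD_E r)) as H.
  intros t; destruct (H t) as [H1 H2]; split; eapply isd_eq; eauto; f_equal; simpl; ring.
Qed.

Fixpoint prodl (l : list C) (r : C) : C :=
  match l with nil => 1%C | x :: l' => ((r - x) * prodl l' r)%C end.

Lemma Top_expch l : forall a r, Top l (expch a r) = expch (a * prodl l r) r.
Proof.
  induction l as [|x l IH]; intros a r; simpl.
  - unfold expch. apply functional_extensionality; intro j;
    apply functional_extensionality; intro t. f_equal. ring.
  - replace (Tsh x (expch a r)) with (expch (a * (r - x)) r).
    + rewrite IH. f_equal. ring.
    + unfold Tsh, expch. apply functional_extensionality; intro j;
      apply functional_extensionality; intro t. simpl. ring.
Qed.

Lemma chain_plus V W : chain V -> chain W -> chain (fun j t => (V j t + W j t)%C).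
Proof. intros H1 H2 j. apply hasD_plus; auto. Qed.

Lemma chain_minus V W : chain V -> chain W -> chain (fun j t => (V j t - W j t)%C).
Proof. intros H1 H2 j. apply hasD_minus; auto. Qed.

Lemma Top_plus l : forall V W, Top l (fun j t => (V j t + W j t)%C) = 
   (fun j t => (Top l V j t + Top l W j t)%C).
Proof.
  induction l as [|x l IH]; intros V W; simpl; auto.
  rewrite <- IH. f_equal. unfold Tsh. apply functional_extensionality; intro j;
      apply functional_extensionality; intro t. ring.
Qed.

Lemma Top_minus l : forall V W, Top l (fun j t => (V j t - W j t)%C) = 
   (fun j t => (Top l V j t - Top l W j t)%C).
Proof.
  induction l as [|x l IH]; intros V W; simpl; auto.
  rewrite <- IH. f_equal. unfold Tsh. apply functional_extensionality; intro j;
      apply functional_extensionality; intro t. ring.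
Qed.

Lemma Cmod_sub_bound (x y : C) : Cmod x <= Cmod (x + y) + Cmod y.
Proof.
  replace x with ((x + y) + - y)%C at 1 by ring.
  rewrite <- (Cmod_opp y). apply Cmod_triangle.
Qed.

Lemma Cmod_bound_E a k t : Re k <= 0 -> 0 <= t -> Cmod (a * E k t) <= Cmod a.
Proof.
  intros Hk Ht. rewrite Cmod_mult, Cmod_E.
  assert (exp (Re k * t) <= 1).
  { rewrite <- exp_0. destruct (Req_dec (Re k * t) 0) as [->|]; [lra|].
    left; apply exp_increasing. nra. }
  pose proof (Cmod_ge_0 a). nra.
Qed.

Lemma grow1 k a (r : R -> C) M M' : 0 < Re k ->
  (forall t, 0 <= t -> Cmod (a * E k t + r t) <= M) ->
  (forall t, 0 <= t -> Cmod (r t) <= M') -> a = 0%C.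
Proof.
  intros Hk H1 H2. destruct (Ceq_dec a 0) as [|Ha]; auto. exfalso.
  apply Cmod_gt_0 in Ha.
  set (K := Rabs (M + M') + 1).
  set (t := K / (Cmod a * Re k)).
  assert (Ht : 0 < t). { unfold t, K. apply Rdiv_lt_0_compat. pose proof (Rabs_pos (M+M')); lra. nra. }
  assert (Hb : Cmod a * exp (Re k * t) <= M + M').
  { rewrite <- Cmod_E, <- Cmod_mult.
    pose proof (Cmod_sub_bound (a * E k t) (r t)). pose proof (H1 t (Rlt_le _ _ Ht)).
    pose proof (H2 t (Rlt_le _ _ Ht)). lra. }
  assert (He : Re k * t < exp (Re k * t)).
  { pose proof (exp_ineq1 (Re k * t)). assert (0 < Re k * t) by nra. lra. }
  assert (Cmod a * (Re k * t) = K).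
  { unfold t. field. split; lra. }
  pose proof (Rle_abs (M + M')). unfold K in *. nra.
Qed.

Lemma grow2 k3 k4 a3 a4 (r : R -> C) M M' h : 0 < Re k3 -> 0 < Re k4 -> 0 <= h ->
  E k3 h <> E k4 h ->
  (forall t, 0 <= t -> Cmod (a3 * E k3 t + a4 * E k4 t + r t) <= M) ->
  (forall t, 0 <= t -> Cmod (r t) <= M') -> a3 = 0%C /\ a4 = 0%C.
Proof.
  intros H3 H4 Hh Hne HM HM'.
  assert (A3 : a3 = 0%C).
  { assert (Z : (a3 * (E k3 h - E k4 h))%C = 0%C).
    { apply (grow1 k3 _ (fun t => r (t + h)%R - E k4 h * r t)%C
              (M + Cmod (E k4 h) * M) (M' + Cmod (E k4 h) * M')); auto.
      - intros t Ht.
        replace (a3 * (E k3 h - E k4 h) * E k3 t + (r (t + h)%R - E k4 h * r t))%C with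
           ((a3 * E k3 (t+h)%R + a4 * E k4 (t+h)%R + r (t+h)%R) +
            - (E k4 h * (a3 * E k3 t + a4 * E k4 t + r t)))%C
          by (rewrite !E_plus; ring).
        eapply Rle_trans; [apply Cmod_triangle|]. rewrite Cmod_opp, Cmod_mult.
        pose proof (HM (t+h) ltac:(lra)). pose proof (HM t Ht).
        pose proof (Cmod_ge_0 (E k4 h)). nra.
      - intros t Ht. unfold Cminus.
        eapply Rle_trans; [apply Cmod_triangle|]. rewrite Cmod_opp, Cmod_mult.
        pose proof (HM' (t+h) ltac:(lra)). pose proof (HM' t Ht).
        pose proof (Cmod_ge_0 (E k4 h)). nra. }
    destruct (Ceq_dec a3 0) as [|Ha]; auto. exfalso.
    apply (Cmult_neq_0 a3 (E k3 h - E k4 h)); auto.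
    intro Hd. apply Hne. apply (f_equal (fun z => z + E k4 h)%C) in Hd. ring_simplify in Hd.
    rewrite Hd. ring. }
  split; auto. subst a3.
  apply (grow1 k4 a4 r M M'); auto.
  intros t Ht. replace (a4 * E k4 t + r t)%C with (0 * E k3 t + a4 * E k4 t + r t)%C by ring.
  auto.
Qed.

Lemma hasD_id : hasD (fun t => RtoC t) (fun _ => 1%C).
Proof.
  intros t; split; unfold RtoC, Re, Im; simpl.
  - apply (is_derive_id (K:=R_AbsRing)).
  - eapply isd_eq; [apply is_derive_const|reflexivity].
Qed.

Lemma tangential V M : chain V -> (forall t, 0 < t -> V 2%nat t = 0%C) ->
  (forall t, 0 <= t -> Cmod (V 0%nat t) <= M) ->
  V 1%nat 0 = 0%C /\ forall t, 0 <= t -> V 0%nat t = V 0%nat 0.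
Proof.
  intros HV H2 HM.
  assert (H1 : forall t, 0 <= t -> V 1%nat t = V 1%nat 0).
  { apply (const_lemma _ _ (HV 1%nat)); auto. }
  set (c := V 1%nat 0).
  assert (Hg : forall t, 0 <= t -> (V 0%nat t - c * t)%C = (V 0%nat 0 - c * 0)%C).
  { apply (const_lemma (fun t => V 0%nat t - c * t)%C (fun t => V 1%nat t - c * 1)%C).
    - apply hasD_minus; [apply HV | apply hasD_cmul, hasD_id].
    - intros t Ht. rewrite H1 by lra. fold c. ring. }
  assert (Hc : c = 0%C).
  { destruct (Ceq_dec c 0) as [|Hc]; auto. exfalso. apply Cmod_gt_0 in Hc.
    set (t := (2 * Rabs M + 1) / Cmod c).
    assert (Ht : 0 < t). { unfold t. apply Rdiv_lt_0_compat; auto. pose proof (Rabs_pos M); lra. }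
    assert (E1 : (c * t)%C = (V 0%nat t - V 0%nat 0)%C).
    { pose proof (Hg t (Rlt_le _ _ Ht)). apply (f_equal (fun z => c * t + z - (V 0%nat 0 - c * 0))%C) in H.
      ring_simplify in H. rewrite <- H. ring. }
    assert (Cmod (c * t) = 2 * Rabs M + 1).
    { rewrite Cmod_mult, Cmod_R, Rabs_pos_eq by lra. unfold t. field. lra. }
    assert (Cmod (c * t) <= M + M).
    { rewrite E1. unfold Cminus. eapply Rle_trans; [apply Cmod_triangle|]. rewrite Cmod_opp.
      pose proof (HM t (Rlt_le _ _ Ht)). pose proof (HM 0 (Rle_refl _)). lra. }
    pose proof (Rle_abs M). lra. }
  split; auto.
  intros t Ht. pose proof (Hg t Ht). rewrite Hc in H. 
  apply (f_equal (fun z => z + 0 * t)%C) in H. ring_simplify in H. rewrite H. ring.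
Qed.

Lemma second_order (V : nat -> R -> C) (mu : C) (M : R) : chain V -> mu <> 0%C -> 0 < Re mu ->
  (forall t, 0 < t -> V 2%nat t = (mu * mu * V 0%nat t)%C) ->
  (forall t, 0 <= t -> Cmod (V 0%nat t) <= M) ->
  V 1%nat 0 = (- mu * V 0%nat 0)%C.
Proof.
  intros HV Hmu Hre Hode HM.
  set (a1 := ((mu * V 0%nat 0 - V 1%nat 0) / (2 * mu))%C).
  set (a2 := ((V 1%nat 0 + mu * V 0%nat 0) / (2 * mu))%C).
  set (D := fun j t => (V j t - (expch a1 (-mu) j t + expch a2 mu j t))%C).
  assert (HD : chain D).
  { apply chain_minus; auto. apply chain_plus; apply chain_expch. }
  assert (Hz : forall t, 0 < t -> D 0%nat t = 0%C).
  { apply (uniq (mu :: (-mu)%C :: nil)); auto.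
    - intros t Ht. unfold D. rewrite Top_minus, Top_plus, !Top_expch.
      simpl. unfold Tsh. rewrite Hode by auto. unfold expch. simpl. ring.
    - intros j Hj. simpl in Hj. unfold D, expch. rewrite !E_0.
      destruct j as [|[|j]]; [| |lia]; simpl; unfold a1, a2; field; auto. }
  assert (Hrep : forall t, 0 <= t -> V 0%nat t = (a2 * E mu t + a1 * E (-mu) t)%C).
  { intros t Ht. destruct (Req_dec t 0) as [->|Hn].
    - rewrite !E_0. unfold a1, a2. field. auto.
    - pose proof (Hz t ltac:(lra)) as H. unfold D, expch in H. simpl in H.
      apply (f_equal (fun z => z + (a1 * E (-mu) t + a2 * E mu t))%C) in H.
      ring_simplify in H. rewrite H. ring. }
  assert (A2 : a2 = 0%C).
  { apply (grow1 mu a2 (fun t => a1 * E (-mu) t)%C M (Cmod a1)); auto.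
    - intros t Ht. rewrite <- Hrep; auto.
    - intros t Ht. apply Cmod_bound_E; auto. unfold Re in *; simpl; lra. }
  unfold a2 in A2.
  apply (f_equal (fun z => z * (2 * mu) - mu * V 0%nat 0)%C) in A2.
  field_simplify in A2; auto.
Qed.

Lemma Csub0 (x y : C) : (x - y)%C = 0%C -> x = y.
Proof. intro H. apply (f_equal (fun z => z + y)%C) in H. ring_simplify in H. rewrite H. ring. Qed.

Lemma fourth_order (V : nat -> R -> C) (a b s : C) (M h : R) : chain V ->
  a <> 0%C -> b <> 0%C -> (a * a - b * b)%C <> 0%C -> (b * b - a * a)%C <> 0%C ->
  Re a < 0 -> Re b < 0 -> 0 <= h -> E (-a) h <> E (-b) h ->
  (a * a + b * b)%C = 0%C -> (a * a * (b * b))%C = s ->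
  (forall t, 0 < t -> (s * V 0%nat t)%C = (- V 4%nat t)%C) ->
  (forall t, 0 <= t -> Cmod (V 0%nat t) <= M) ->
  (a * (V 2%nat 0 - b * b * V 0%nat 0))%C = (V 3%nat 0 - b * b * V 1%nat 0)%C /\
  (b * (V 2%nat 0 - a * a * V 0%nat 0))%C = (V 3%nat 0 - a * a * V 1%nat 0)%C.
Proof.
  intros HV Ha Hb Hab Hba Hra Hrb Hh Hne Hsum Hprod Hode HM.
  set (Ea := (V 2%nat 0 - b * b * V 0%nat 0)%C).
  set (Oa := (V 3%nat 0 - b * b * V 1%nat 0)%C).
  set (Eb := (V 2%nat 0 - a * a * V 0%nat 0)%C).
  set (Ob := (V 3%nat 0 - a * a * V 1%nat 0)%C).
  set (ap := ((Ea + Oa / a) / (2 * (a * a - b * b)))%C).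
  set (am := ((Ea - Oa / a) / (2 * (a * a - b * b)))%C).
  set (bp := ((Eb + Ob / b) / (2 * (b * b - a * a)))%C).
  set (bm := ((Eb - Ob / b) / (2 * (b * b - a * a)))%C).
  set (D := fun j t => (V j t - (expch ap a j t + expch am (-a) j t
                       + expch bp b j t + expch bm (-b) j t))%C).
  assert (HD : chain D).
  { apply chain_minus; auto. repeat apply chain_plus; apply chain_expch. }
  assert (Hz : forall t, 0 < t -> D 0%nat t = 0%C).
  { apply (uniq (a :: (-a)%C :: b :: (-b)%C :: nil)); auto.
    - intros t Ht. unfold D. rewrite Top_minus, !Top_plus, !Top_expch.
      assert (Top (a :: (-a)%C :: b :: (-b)%C :: nil) V 0%nat t =
              V 4%nat t - (a * a + b * b) * V 2%nat t + a * a * (b * b) * V 0%nat t)%C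
        by (simpl; unfold Tsh; ring).
      rewrite H, Hsum, Hprod.
      assert (H4 : V 4%nat t = (- (s * V 0%nat t))%C) by (rewrite (Hode t Ht); ring).
      unfold expch; simpl. rewrite H4. ring.
    - intros j Hj. simpl in Hj. unfold D, expch. rewrite !E_0.
      unfold ap, am, bp, bm, Ea, Oa, Eb, Ob.
      destruct j as [|[|[|[|j]]]]; [| | | |lia]; simpl; field; auto. }
  assert (Hrep : forall t, 0 <= t -> V 0%nat t =
      (am * E (-a) t + bm * E (-b) t + (ap * E a t + bp * E b t))%C).
  { intros t Ht. destruct (Req_dec t 0) as [->|Hn].
    - rewrite !E_0. unfold ap, am, bp, bm, Ea, Oa, Eb, Ob. field. auto.
    - pose proof (Hz t ltac:(lra)) as H. unfold D, expch in H. simpl in H.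
      apply Csub0 in H. rewrite H. ring. }
  destruct (grow2 (-a) (-b) am bm (fun t => ap * E a t + bp * E b t)%C M
              (Cmod ap + Cmod bp) h) as [Am Bm]; auto.
  - unfold Re in *; simpl; lra.
  - unfold Re in *; simpl; lra.
  - intros t Ht. rewrite <- Hrep; auto.
  - intros t Ht. eapply Rle_trans; [apply Cmod_triangle|].
    pose proof (Cmod_bound_E ap a t ltac:(lra) Ht).
    pose proof (Cmod_bound_E bp b t ltac:(lra) Ht). lra.
  - split.
    + apply Csub0. transitivity (a * (2 * (a * a - b * b)) * am)%C.
      * unfold am. fold Ea Oa. field. auto.
      * rewrite Am. ring.
    + apply Csub0. transitivity (b * (2 * (b * b - a * a)) * bm)%C.
      * unfold bm. fold Eb Ob. field. auto.
      * rewrite Bm. ring.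
Qed.

Lemma second_zero (V : nat -> R -> C) (mu : C) : chain V ->
  (forall t, 0 < t -> V 2%nat t = (mu * mu * V 0%nat t)%C) ->
  V 0%nat 0 = 0%C -> V 1%nat 0 = 0%C -> forall t, 0 <= t -> V 0%nat t = 0%C.
Proof.
  intros HV Hode H0 H1 t Ht. destruct (Req_dec t 0) as [->|]; auto.
  apply (uniq (mu :: (-mu)%C :: nil)); [exact HV| | |lra].
  - intros s Hs. simpl. unfold Tsh. rewrite Hode by auto. ring.
  - intros j Hj. simpl in Hj. destruct j as [|[|j]]; auto; lia.
Qed.

Lemma fourth_zero (V : nat -> R -> C) (a b s : C) : chain V ->
  (a * a + b * b)%C = 0%C -> (a * a * (b * b))%C = s ->
  (forall t, 0 < t -> (s * V 0%nat t)%C = (- V 4%nat t)%C) ->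
  (forall j, (j < 4)%nat -> V j 0 = 0%C) -> forall t, 0 <= t -> V 0%nat t = 0%C.
Proof.
  intros HV Hsum Hprod Hode Hj t Ht. destruct (Req_dec t 0) as [->|]; [apply Hj; lia|].
  apply (uniq (a :: (-a)%C :: b :: (-b)%C :: nil)); [exact HV| |intros j Hjl; apply Hj; simpl in Hjl; lia|lra].
  intros u Hu.
  assert (HT : (Top (a :: (-a)%C :: b :: (-b)%C :: nil) V 0%nat u =
              V 4%nat u - (a * a + b * b) * V 2%nat u + a * a * (b * b) * V 0%nat u)%C)
        by (simpl; unfold Tsh; ring).
  rewrite HT, Hsum, Hprod.
  assert (H4 : V 4%nat u = (- (s * V 0%nat u))%C) by (rewrite (Hode u Hu); ring).
  rewrite H4. ring.
Qed.

Lemma Dn0 X t : Dn 0 X t = X t.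
Proof. unfold Dn; simpl. destruct (X t) as [[a b] [c d]]; reflexivity. Qed.

Lemma hasD_ext f f2 g g2 : (forall t, f t = f2 t) -> (forall t, g t = g2 t) ->
  hasD f g -> hasD f2 g2.
Proof.
  intros Hf Hg H t. destruct (H t) as [H1 H2]. rewrite <- Hg. split.
  - eapply is_derive_ext; [|exact H1]. intro u; simpl; rewrite Hf; reflexivity.
  - eapply is_derive_ext; [|exact H2]. intro u; simpl; rewrite Hf; reflexivity.
Qed.

Lemma hasD_pair (a b a' b' : R -> R) : (forall t, is_derive a t (a' t)) ->
  (forall t, is_derive b t (b' t)) -> hasD (fun t => (a t, b t)) (fun t => (a' t, b' t)).
Proof. intros H1 H2 t; split; unfold Re, Im; simpl; auto. Qed.

Lemma smooth_der (f : R -> R) : (forall n t, ex_derive_n f n t) ->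
  forall j t, is_derive (Derive_n f j) t (Derive_n f (S j) t).
Proof. intros H j t. apply Derive_correct. exact (H (S j) t). Qed.

Definition ch (X : R -> C2) (e : vec2) : nat -> R -> C := fun j t => cdot (Dn j X t) e.

Lemma chain_ch X e : smooth X -> chain (ch X e).
Proof.
  intros HX j.
  assert (H1 := smooth_der _ (HX (fun t => fst (fst (X t))) ltac:(simpl; tauto))).
  assert (H2 := smooth_der _ (HX (fun t => snd (fst (X t))) ltac:(simpl; tauto))).
  assert (H3 := smooth_der _ (HX (fun t => fst (snd (X t))) ltac:(simpl; tauto))).
  assert (H4 := smooth_der _ (HX (fun t => snd (snd (X t))) ltac:(simpl; tauto))).
  pose proof (hasD_plus _ _ _ _
     (hasD_mult _ _ _ _ (hasD_pair _ _ _ _ (H1 j) (H2 j)) (hasD_const (RtoC (fst e))))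
     (hasD_mult _ _ _ _ (hasD_pair _ _ _ _ (H3 j) (H4 j)) (hasD_const (RtoC (snd e))))) as H.
  eapply hasD_ext; [| |exact H]; intro t; unfold ch, cdot, Dn; simpl; [reflexivity|].
  ring.
Qed.

Lemma bound_ch X e : bounded_on_halfline X ->
  exists M, forall t, 0 <= t -> Cmod (ch X e 0%nat t) <= M.
Proof.
  intros [M HM]. exists (M * Rabs (fst e) + M * Rabs (snd e)). intros t Ht.
  unfold ch. rewrite Dn0. unfold cdot. destruct (HM t Ht) as [A B].
  eapply Rle_trans; [apply Cmod_triangle|]. rewrite !Cmod_mult, !Cmod_R.
  pose proof (Rabs_pos (fst e)). pose proof (Rabs_pos (snd e)). nra.
Qed.

Lemma vec_zero (Y : C2) (d : vec2) : rdot d d = 1 -> cdot Y d = 0%C ->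
  cdot Y (- snd d, fst d) = 0%C -> Y = C2zero.
Proof.
  destruct Y as [[a1 a2] [b1 b2]]; destruct d as [x y]; unfold rdot, cdot, C2zero; simpl.
  intros H E1 E2. unfold RtoC, Cmult, Cplus in *; simpl in *.
  injection E1; injection E2; intros. 
  assert (a1 = 0) by nra. assert (b1 = 0) by nra. assert (a2 = 0) by nra. assert (b2 = 0) by nra.
  subst; reflexivity.
Qed.

Lemma cdot_comb (Y : C2) (u v : vec2) (al be : R) :
  cdot Y (al * fst u + be * fst v, al * snd u + be * snd v) = (al * cdot Y u + be * cdot Y v)%C.
Proof.
  destruct Y as [[a1 a2] [b1 b2]]; unfold cdot, RtoC, Cmult, Cplus; simpl.
  f_equal; ring.
Qed.

Definition csqrt (z : C) : C :=
  let u := sqrt ((Cmod z + Re z) / 2) in (u, Im z / (2 * u)).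

Lemma csqrt_spec z : 0 < Re z -> (csqrt z * csqrt z)%C = z /\ 0 < Re (csqrt z).
Proof.
  destruct z as [x y]; unfold csqrt, Cmod, Re, Im; simpl. intros Hx.
  set (m := sqrt (x * (x * 1) + y * (y * 1))).
  assert (Hm : m * m = x * x + y * y). { unfold m. rewrite sqrt_sqrt; nra. }
  assert (Hm0 : 0 <= m) by apply sqrt_pos.
  assert (Hmx : 0 < m + x) by lra.
  set (u := sqrt ((m + x) / 2)).
  assert (Hu : u * u = (m + x) / 2) by (unfold u; rewrite sqrt_sqrt; lra).
  assert (Hu0 : 0 < u) by (unfold u; apply sqrt_lt_R0; lra).
  split; [|exact Hu0].
  unfold Cmult; simpl. f_equal.
  - field_simplify; [|lra].
    replace (u ^ 4) with ((u*u)*(u*u)) by ring. rewrite Hu.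
    replace (u ^ 2) with (u * u) by ring. rewrite Hu.
    field_simplify; [|lra]. replace (m ^ 2) with (m * m) by ring. rewrite Hm. field. lra.
  - field. lra.
Qed.

Lemma E_diff k3 k4 h : Im k3 * h = Im k4 * h + PI -> E k3 h <> E k4 h.
Proof.
  intros Hi He. unfold E in He. rewrite Hi, neg_cos, neg_sin in He.
  injection He; intros H1 H2.
  pose proof (exp_pos (Re k3 * h)). pose proof (exp_pos (Re k4 * h)).
  pose proof (sin2_cos2 (Im k4 * h)). unfold Rsqr in *.
  assert (cos (Im k4 * h) = 0) by nra. assert (sin (Im k4 * h) = 0) by nra. nra.
Qed.

Lemma Cmult_eq0 (z w : C) : z <> 0%C -> (z * w)%C = 0%C -> w = 0%C.
Proof. intros Hz H. replace w with (/ z * (z * w))%C by (field; auto). rewrite H. ring. Qed.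

Lemma RtoC_neq (x : R) : x <> 0 -> RtoC x <> 0%C.
Proof. intros H E. apply H. injection E; auto. Qed.

Lemma core (a b mu p q n V2 V3 W2 W3 : C) (c2 s2 c3 s3 : R) :
  (a * b)%C = mu -> mu <> 0%C -> a <> 0%C -> (a - b)%C <> 0%C -> (b * (b + a))%C <> 0%C ->
  s2 <> 0 ->
  ((- (a + b)) * (s2 + s3) - (s2 * c3 + c2 * s3))%C <> 0%C ->
  n = (- mu * q)%C ->
  (a * (V2 - b * b * (s2 * p + c2 * q)))%C = (V3 - b * b * n)%C ->
  (b * (V2 - a * a * (s2 * p + c2 * q)))%C = (V3 - a * a * n)%C ->
  (a * (W2 - b * b * (- s3 * p + c3 * q)))%C = (W3 - b * b * n)%C ->
  (b * (W2 - a * a * (- s3 * p + c3 * q)))%C = (W3 - a * a * n)%C ->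
  W2 = (- V2)%C -> W3 = V3 ->
  p = 0%C /\ q = 0%C /\ V2 = 0%C /\ V3 = 0%C.
Proof.
  intros Hab Hmu Ha Hamb Hbab Hs2 HF Hn C1 C2 C3 C4 -> ->.
  set (V0 := (s2 * p + c2 * q)%C) in *.
  set (W0 := (- s3 * p + c3 * q)%C) in *.
  assert (Z1 : (a * (V2 - b * b * V0) - (V3 - b * b * n))%C = 0%C) by (rewrite C1; ring).
  assert (Z2 : (b * (V2 - a * a * V0) - (V3 - a * a * n))%C = 0%C) by (rewrite C2; ring).
  assert (Z3 : (a * (- V2 - b * b * W0) - (V3 - b * b * n))%C = 0%C) by (rewrite C3; ring).
  assert (Z4 : (b * (- V2 - a * a * W0) - (V3 - a * a * n))%C = 0%C) by (rewrite C4; ring).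
  assert (e1 : (V2 + a * b * V0 - (a + b) * n)%C = 0%C).
  { apply (Cmult_eq0 (a - b)); auto.
    transitivity ((a * (V2 - b * b * V0) - (V3 - b * b * n)) -
                  (b * (V2 - a * a * V0) - (V3 - a * a * n)))%C; [ring|].
    rewrite Z1, Z2; ring. }
  assert (e2 : (- V2 + a * b * W0 - (a + b) * n)%C = 0%C).
  { apply (Cmult_eq0 (a - b)); auto.
    transitivity ((a * (- V2 - b * b * W0) - (V3 - b * b * n)) -
                  (b * (- V2 - a * a * W0) - (V3 - a * a * n)))%C; [ring|].
    rewrite Z3, Z4; ring. }
  assert (e3 : (2 * V2 - b * b * (V0 - W0))%C = 0%C).
  { apply (Cmult_eq0 a); auto.
    transitivity ((a * (V2 - b * b * V0) - (V3 - b * b * n)) -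
                  (a * (- V2 - b * b * W0) - (V3 - b * b * n)))%C; [ring|].
    rewrite Z1, Z3; ring. }
  assert (D0 : (V0 - W0)%C = 0%C).
  { apply (Cmult_eq0 (b * (b + a))); auto.
    transitivity ((V2 + a * b * V0 - (a + b) * n) - (- V2 + a * b * W0 - (a + b) * n)
                  - (2 * V2 - b * b * (V0 - W0)))%C; [ring|].
    rewrite e1, e2, e3; ring. }
  assert (HV2 : V2 = 0%C).
  { apply (Cmult_eq0 2). apply RtoC_neq; lra.
    transitivity ((2 * V2 - b * b * (V0 - W0)) + b * b * (V0 - W0))%C; [ring|].
    rewrite e3, D0; ring. }
  assert (HV0 : (V0 + (a + b) * q)%C = 0%C).
  { apply (Cmult_eq0 mu); auto.
    transitivity ((V2 + a * b * V0 - (a + b) * n) - V2)%C.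
    - rewrite Hn, <- Hab. ring.
    - rewrite e1, HV2; ring. }
  assert (Hq : q = 0%C).
  { apply (Cmult_eq0 (- (a + b) * (s2 + s3) - (s2 * c3 + c2 * s3))%C).
    - exact HF.
    - transitivity (- (s3 * (V0 + (a + b) * q) + s2 * (V0 + (a + b) * q) - s2 * (V0 - W0)))%C.
      + unfold V0, W0. ring.
      + rewrite HV0, D0. ring. }
  assert (Hp : p = 0%C).
  { apply (Cmult_eq0 s2). apply RtoC_neq; auto.
    transitivity ((V0 + (a + b) * q) - (c2 + (a + b)) * q)%C; [unfold V0; ring|].
    rewrite HV0, Hq. ring. }
  split; [auto|split; [auto|split; [auto|]]].
  assert (HV0' : V0 = 0%C) by (unfold V0; rewrite Hp, Hq; ring).
  apply Csub0 in Z1. rewrite HV2, HV0', Hn, Hq in Z1.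
  replace V3 with (V3 - b * b * (- mu * 0))%C by ring. rewrite <- Z1. ring.
Qed.

Lemma Re_neq0 (z : C) : Re z <> 0 -> z <> 0%C.
Proof. intros H E. apply H. rewrite E. reflexivity. Qed.
Lemma Im_neq0 (z : C) : Im z <> 0 -> z <> 0%C.
Proof. intros H E. apply H. rewrite E. reflexivity. Qed.

Lemma roots (s : C) : 0 < Re s -> exists a b mu h,
  (mu * mu)%C = s /\ mu <> 0%C /\ 0 < Re mu /\
  (a * a + b * b)%C = 0%C /\ (a * a * (b * b))%C = s /\ (a * b)%C = mu /\
  a <> 0%C /\ b <> 0%C /\ (a * a - b * b)%C <> 0%C /\ (b * b - a * a)%C <> 0%C /\
  Re a < 0 /\ Re b < 0 /\ 0 <= h /\ E (-a) h <> E (-b) h /\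
  (a - b)%C <> 0%C /\ (b * (b + a))%C <> 0%C /\
  (forall (S : C) (s2 s3 : R), Re S <= 0 -> 0 < s2 -> 0 < s3 ->
     ((- (a + b)) * (s2 + s3) - S)%C <> 0%C).
Proof.
  intros Hs.
  destruct (csqrt_spec s Hs) as [Hmu Hmupos].
  set (mu := csqrt s) in *.
  destruct (csqrt_spec mu Hmupos) as [Hnu Hnupos].
  set (nu := csqrt mu) in *.
  destruct nu as [x0 y0] eqn:Enu.
  unfold Re in Hnupos; simpl in Hnupos.
  assert (Hmu' : mu = (x0 * x0 - y0 * y0, 2 * x0 * y0)%R).
  { rewrite <- Hnu. unfold Cmult; simpl. f_equal; ring. }
  assert (Hrm : 0 < x0 * x0 - y0 * y0).
  { rewrite Hmu' in Hmupos. unfold Re in Hmupos; simpl in Hmupos. lra. }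
  assert (Hxy1 : y0 < x0) by nra. assert (Hxy2 : - y0 < x0) by nra.
  set (r := sqrt 2 / 2).
  assert (Hr : r * r = 1/2).
  { unfold r. replace (sqrt 2 / 2 * (sqrt 2 / 2)) with (sqrt 2 * sqrt 2 / 4) by field.
    rewrite sqrt_sqrt; lra. }
  assert (Hr2 : r ^ 2 = 1/2) by (rewrite <- Hr; ring).
  assert (Hr0 : 0 < r). { unfold r. pose proof (sqrt_lt_R0 2 ltac:(lra)). lra. }
  set (a := ((- (r * (x0 - y0)))%R, (- (r * (x0 + y0)))%R) : C).
  set (b := ((- (r * (x0 + y0)))%R, (r * (x0 - y0))%R) : C).
  assert (Hab : (a * b)%C = mu).
  { rewrite Hmu'. unfold a, b, Cmult; simpl. f_equal; ring_simplify; try rewrite Hr2; field. }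
  assert (Hsum : (a * a + b * b)%C = 0%C).
  { unfold a, b, Cmult, Cplus, RtoC; simpl. f_equal; ring_simplify; try rewrite Hr2; field. }
  assert (Ha : a <> 0%C). { apply Re_neq0. unfold a, Re; simpl. nra. }
  assert (Hb : b <> 0%C). { apply Re_neq0. unfold b, Re; simpl. nra. }
  assert (Haa : (a * a)%C <> 0%C) by (apply Cmult_neq_0; auto).
  exists a, b, mu, (PI / (2 * r * x0)).
  split; [auto|]. split; [apply Re_neq0; lra|]. split; [auto|].
  split; [auto|]. split.
  { rewrite <- Hmu, <- Hab. ring. }
  split; [auto|]. split; [auto|]. split; [auto|].
  split.
  { replace (a * a - b * b)%C with (2 * (a * a) - (a * a + b * b))%C by ring.
    rewrite Hsum. replace (2 * (a * a) - 0)%C with (2 * (a * a))%C by ring.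
    apply Cmult_neq_0; auto. apply RtoC_neq; lra. }
  split.
  { replace (b * b - a * a)%C with ((a * a + b * b) - 2 * (a * a))%C by ring.
    rewrite Hsum. replace (0 - 2 * (a * a))%C with (- (2 * (a * a)))%C by ring.
    intro H. apply (Cmult_neq_0 2 (a * a)); auto. apply RtoC_neq; lra.
    replace (2 * (a * a))%C with (- - (2 * (a * a)))%C by ring. rewrite H. ring. }
  split. { unfold a, Re; simpl. nra. }
  split. { unfold b, Re; simpl. nra. }
  split. { left. apply Rdiv_lt_0_compat. apply PI_RGT_0. nra. }
  split.
  { apply E_diff. unfold a, b, Im; simpl. field. split; lra. }
  split.
  { apply Im_neq0. unfold a, b, Im; simpl. nra. }
  split.
  { apply Cmult_neq_0; auto. apply Re_neq0. unfold a, b, Re; simpl. nra. }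
  intros S s2 s3 HS H2 H3. apply Re_neq0.
  destruct S as [S1 S2]. unfold a, b, Re in *; simpl in *. assert (0 < r * x0 * (s2 + s3)) by (apply Rmult_lt_0_compat; [apply Rmult_lt_0_compat|]; lra). nra.
Qed.

Lemma perp_eq d : perp d = (- snd d, fst d).
Proof. unfold perp, rot. rewrite cos_PI2, sin_PI2. destruct d; simpl; f_equal; ring. Qed.

Lemma rot_neg th x y : rot (- th) (x, y) = (cos th * x + sin th * y, - sin th * x + cos th * y).
Proof. unfold rot; simpl. rewrite cos_neg, sin_neg. f_equal; ring. Qed.

Lemma rot_pos th x y : rot th (x, y) = (cos th * x - sin th * y, sin th * x + cos th * y).
Proof. unfold rot; simpl. f_equal; ring. Qed.

Lemma rotA (Y : C2) x y c s : cdot Y (c * x + s * y, - s * x + c * y) =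
  (c * cdot Y (x, y) - s * cdot Y ((- y)%R, x))%C.
Proof. destruct Y as [[a1 a2] [b1 b2]]; unfold cdot; apply C_eq; unfold Re, Im, RtoC, Cmult, Cplus, Cminus, Copp; simpl; ring. Qed.

Lemma rotB (Y : C2) x y c s : cdot Y (- (- s * x + c * y), c * x + s * y) =
  (s * cdot Y (x, y) + c * cdot Y ((- y)%R, x))%C.
Proof. destruct Y as [[a1 a2] [b1 b2]]; unfold cdot; apply C_eq; unfold Re, Im, RtoC, Cmult, Cplus, Cminus, Copp; simpl; ring. Qed.

Lemma rotC (Y : C2) x y c s : cdot Y (c * x - s * y, s * x + c * y) =
  (c * cdot Y (x, y) + s * cdot Y ((- y)%R, x))%C.
Proof. destruct Y as [[a1 a2] [b1 b2]]; unfold cdot; apply C_eq; unfold Re, Im, RtoC, Cmult, Cplus, Cminus, Copp; simpl; ring. Qed.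

Lemma rotD (Y : C2) x y c s : cdot Y (- (s * x + c * y), c * x - s * y) =
  (- s * cdot Y (x, y) + c * cdot Y ((- y)%R, x))%C.
Proof. destruct Y as [[a1 a2] [b1 b2]]; unfold cdot; apply C_eq; unfold Re, Im, RtoC, Cmult, Cplus, Cminus, Copp; simpl; ring. Qed.

Lemma trigC th : (RtoC (sin th) * RtoC (sin th) + RtoC (cos th) * RtoC (cos th))%C = 1%C.
Proof.
  rewrite <- !RtoC_mult, <- RtoC_plus. pose proof (sin2_cos2 th). unfold Rsqr in H.
  rewrite H. reflexivity.
Qed.

Lemma junc2 (A1 B1 A2 B2 : C) (c s : R) : (s * s + c * c)%C = 1%C -> s <> 0 -> A1 = 0%C ->
  (c * A2 - s * B2)%C = 0%C ->
  (A2 + (c * A1 - s * B1) - c * (A1 + (c * A2 - s * B2)))%C = 0%C ->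
  (s * A2 + c * B2)%C = B1.
Proof.
  intros Htr Hs HA1 HZ HH. apply Csub0. apply (Cmult_eq0 s); [apply RtoC_neq; auto|].
  transitivity ((s * s + c * c - 1) * A2 + (A2 + (c * A1 - s * B1) - c * (A1 + (c * A2 - s * B2))))%C.
  - rewrite HA1. ring.
  - rewrite HH, Htr. ring.
Qed.

Lemma junc3 (A1 B1 A3 B3 : C) (c s : R) : (s * s + c * c)%C = 1%C -> s <> 0 -> A1 = 0%C ->
  (c * A3 + s * B3)%C = 0%C ->
  (A3 + (c * A1 + s * B1) - c * (A1 + (c * A3 + s * B3)))%C = 0%C ->
  (- s * A3 + c * B3)%C = B1.
Proof.
  intros Htr Hs HA1 HZ HH. apply Csub0. apply (Cmult_eq0 s); [apply RtoC_neq; auto|].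
  transitivity (- ((s * s + c * c - 1) * A3) - (A3 + (c * A1 + s * B1) - c * (A1 + (c * A3 + s * B3))))%C.
  - rewrite HA1. ring.
  - rewrite HH, Htr. ring.
Qed.

Theorem mainTheorem6
  (d1 d2 d3 : vec2) (th12 th13 : R) (s : CC) (X1 X2 X3 : R -> C2) :
  rdot d1 d1 = 1 ->
  d2 = rot (- th12) d1 ->
  d3 = rot th13 d1 ->
  0 < th12 < PI -> 0 < th13 < PI -> th12 + th13 >= PI ->
  0 < Re s ->
  smooth X1 -> smooth X2 -> smooth X3 ->
  bounded_on_halfline X1 -> bounded_on_halfline X2 -> bounded_on_halfline X3 ->
  (* equations on (0, oo) *)
  (forall t, 0 < t ->
     (s * cdot (X1 t) (perp d1))%C = cdot (Dn 2 X1 t) (perp d1) /\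
     cdot (Dn 2 X1 t) d1 = RtoC 0) ->
  (forall t, 0 < t ->
     (s * cdot (X2 t) (perp d2))%C = (- cdot (Dn 4 X2 t) (perp d2))%C /\
     cdot (Dn 2 X2 t) d2 = RtoC 0) ->
  (forall t, 0 < t ->
     (s * cdot (X3 t) (perp d3))%C = (- cdot (Dn 4 X3 t) (perp d3))%C /\
     cdot (Dn 2 X3 t) d3 = RtoC 0) ->
  (* (i) *)
  X1 0 = X2 0 -> X2 0 = X3 0 ->
  (* (ii) *)
  (cdot (Dn 1 X2 0) d1 + cdot (Dn 1 X1 0) d2
     - RtoC (rdot d1 d2) * (cdot (Dn 1 X1 0) d1 + cdot (Dn 1 X2 0) d2))%C = RtoC 0 ->
  (cdot (Dn 1 X3 0) d1 + cdot (Dn 1 X1 0) d3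
     - RtoC (rdot d1 d3) * (cdot (Dn 1 X1 0) d1 + cdot (Dn 1 X3 0) d3))%C = RtoC 0 ->
  (* (iii) *)
  cdot (Dn 2 X2 0) (perp d2) = (- cdot (Dn 2 X3 0) (perp d3))%C ->
  (* (iv) *)
  cdot (Dn 3 X2 0) (perp d2) = cdot (Dn 3 X3 0) (perp d3) ->
  forall t, 0 <= t -> X1 t = C2zero /\ X2 t = C2zero /\ X3 t = C2zero.
Proof.
  intros Hd1 Hd2 Hd3 Hth12 Hth13 Hsum Hs HX1 HX2 HX3 HB1 HB2 HB3 HE1 HE2 HE3
         Hi1 Hi2 Hii2 Hii3 Hiii Hiv.
  destruct (roots s Hs) as [a [b [mu [h [Hmu [Hmu0 [Hremu [Hab2 [Habs [Hab
    [Ha [Hb [Haa [Hbb [Hra [Hrb [Hh [Hne [Hamb [Hbab HF]]]]]]]]]]]]]]]]]]]].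
  destruct d1 as [x y]. unfold rdot in Hd1; simpl in Hd1.
  rewrite rot_neg in Hd2. rewrite rot_pos in Hd3. subst d2 d3.
  set (c2 := cos th12) in *. set (s2 := sin th12) in *.
  set (c3 := cos th13) in *. set (s3 := sin th13) in *.
  assert (Hs2 : 0 < s2) by (apply sin_gt_0; lra).
  assert (Hs3 : 0 < s3) by (apply sin_gt_0; lra).
  assert (HS : s2 * c3 + c2 * s3 <= 0).
  { unfold s2, c3, c2, s3. rewrite <- sin_plus. apply sin_le_0; lra. }
  assert (tr2 : (RtoC s2 * RtoC s2 + RtoC c2 * RtoC c2)%C = 1%C) by apply trigC.
  assert (tr3 : (RtoC s3 * RtoC s3 + RtoC c3 * RtoC c3)%C = 1%C) by apply trigC.
  assert (r12 : rdot (x, y) (c2 * x + s2 * y, - s2 * x + c2 * y) = c2).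
  { unfold rdot; simpl. transitivity (c2 * (x * x + y * y)); [ring|rewrite Hd1; ring]. }
  assert (r13 : rdot (x, y) (c3 * x - s3 * y, s3 * x + c3 * y) = c3).
  { unfold rdot; simpl. transitivity (c3 * (x * x + y * y)); [ring|rewrite Hd1; ring]. }
  rewrite !perp_eq in *. simpl in *.
  rewrite r12 in Hii2. rewrite r13 in Hii3.
  set (T1 := ch X1 (x, y)). set (N1 := ch X1 (- y, x)).
  set (T2 := ch X2 (c2 * x + s2 * y, - s2 * x + c2 * y)).
  set (N2 := ch X2 (- (- s2 * x + c2 * y), c2 * x + s2 * y)).
  set (T3 := ch X3 (c3 * x - s3 * y, s3 * x + c3 * y)).
  set (N3 := ch X3 (- (s3 * x + c3 * y), c3 * x - s3 * y)).
  assert (cT1 : chain T1) by (apply chain_ch; auto).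
  assert (cT2 : chain T2) by (apply chain_ch; auto).
  assert (cT3 : chain T3) by (apply chain_ch; auto).
  assert (cN1 : chain N1) by (apply chain_ch; auto).
  assert (cN2 : chain N2) by (apply chain_ch; auto).
  assert (cN3 : chain N3) by (apply chain_ch; auto).
  destruct (bound_ch X1 (x, y) HB1) as [MT1 BT1].
  destruct (bound_ch X2 (c2 * x + s2 * y, - s2 * x + c2 * y) HB2) as [MT2 BT2].
  destruct (bound_ch X3 (c3 * x - s3 * y, s3 * x + c3 * y) HB3) as [MT3 BT3].
  destruct (bound_ch X1 (- y, x) HB1) as [MN1 BN1].
  destruct (bound_ch X2 (- (- s2 * x + c2 * y), c2 * x + s2 * y) HB2) as [MN2 BN2].
  destruct (bound_ch X3 (- (s3 * x + c3 * y), c3 * x - s3 * y) HB3) as [MN3 BN3].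
  assert (oT1 : forall t, 0 < t -> T1 2%nat t = 0%C) by (intros t Ht; apply (HE1 t Ht)).
  assert (oT2 : forall t, 0 < t -> T2 2%nat t = 0%C) by (intros t Ht; apply (HE2 t Ht)).
  assert (oT3 : forall t, 0 < t -> T3 2%nat t = 0%C) by (intros t Ht; apply (HE3 t Ht)).
  assert (oN1 : forall t, 0 < t -> N1 2%nat t = (mu * mu * N1 0%nat t)%C).
  { intros t Ht. unfold N1, ch. rewrite Dn0, Hmu. symmetry. apply (HE1 t Ht). }
  assert (oN2 : forall t, 0 < t -> (s * N2 0%nat t)%C = (- N2 4%nat t)%C).
  { intros t Ht. unfold N2, ch. rewrite Dn0. apply (HE2 t Ht). }
  assert (oN3 : forall t, 0 < t -> (s * N3 0%nat t)%C = (- N3 4%nat t)%C).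
  { intros t Ht. unfold N3, ch. rewrite Dn0. apply (HE3 t Ht). }
  destruct (tangential T1 MT1 cT1 oT1 BT1) as [tT1 kT1].
  destruct (tangential T2 MT2 cT2 oT2 BT2) as [tT2 kT2].
  destruct (tangential T3 MT3 cT3 oT3 BT3) as [tT3 kT3].
  pose proof (second_order N1 mu MN1 cN1 Hmu0 Hremu oN1 BN1) as sN1.
  destruct (fourth_order N2 a b s MN2 h cN2 Ha Hb Haa Hbb Hra Hrb Hh Hne Hab2 Habs oN2 BN2)
    as [F2a F2b].
  destruct (fourth_order N3 a b s MN3 h cN3 Ha Hb Haa Hbb Hra Hrb Hh Hne Hab2 Habs oN3 BN3)
    as [F3a F3b].
  set (p := cdot (X1 0) (x, y)). set (q := cdot (X1 0) (- y, x)).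
  set (n := N1 1%nat 0).
  assert (eN10 : N1 0%nat 0 = q) by (unfold N1, ch; rewrite Dn0; reflexivity).
  assert (eN20 : N2 0%nat 0 = (s2 * p + c2 * q)%C).
  { unfold N2, ch. rewrite Dn0, <- Hi1. apply rotB. }
  assert (eN30 : N3 0%nat 0 = (- s3 * p + c3 * q)%C).
  { unfold N3, ch. rewrite Dn0, <- Hi2, <- Hi1. apply rotD. }
  assert (eN21 : N2 1%nat 0 = n).
  { unfold N2, n, N1, ch. rewrite rotB.
    apply (junc2 (cdot (Dn 1 X1 0) (x, y))); auto; [lra| |].
    - unfold T2, ch in tT2. rewrite rotA in tT2. exact tT2.
    - rewrite !rotA in Hii2. exact Hii2. }
  assert (eN31 : N3 1%nat 0 = n).
  { unfold N3, n, N1, ch. rewrite rotD.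
    apply (junc3 (cdot (Dn 1 X1 0) (x, y))); auto; [lra| |].
    - unfold T3, ch in tT3. rewrite rotC in tT3. exact tT3.
    - rewrite !rotC in Hii3. exact Hii3. }
  assert (Hnn : n = (- mu * q)%C) by (unfold n; rewrite sN1, eN10; reflexivity).
  rewrite eN20, eN21 in F2a, F2b. rewrite eN30, eN31 in F3a, F3b.
  assert (HW2 : N3 2%nat 0 = (- N2 2%nat 0)%C).
  { unfold N2, N3, ch. rewrite Hiii. ring. }
  assert (HW3 : N3 3%nat 0 = N2 3%nat 0).
  { unfold N2, N3, ch. rewrite Hiv. reflexivity. }
  assert (HFF : ((- (a + b)) * (s2 + s3) - (s2 * c3 + c2 * s3))%C <> 0%C).
  { apply HF; auto. unfold Re, Cmult, Cplus, RtoC; simpl. lra. }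
  destruct (core a b mu p q n (N2 2%nat 0) (N2 3%nat 0) (N3 2%nat 0) (N3 3%nat 0) c2 s2 c3 s3
     Hab Hmu0 Ha Hamb Hbab ltac:(lra) HFF Hnn F2a F2b F3a F3b HW2 HW3) as [Hp [Hq [HV2 HV3]]].
  assert (Hn0 : n = 0%C) by (rewrite Hnn, Hq; ring).
  intros t Ht. split; [|split].
  - apply (vec_zero (X1 t) (x, y)); [unfold rdot; simpl; lra| |]; simpl.
    + rewrite <- (Dn0 X1 t). change (T1 0%nat t = 0%C). rewrite kT1 by auto.
      unfold T1, ch. rewrite Dn0. exact Hp.
    + rewrite <- (Dn0 X1 t). change (N1 0%nat t = 0%C).
      apply (second_zero N1 mu cN1 oN1); [rewrite eN10; exact Hq | exact Hn0 | exact Ht].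
  - apply (vec_zero (X2 t) (c2 * x + s2 * y, - s2 * x + c2 * y)); simpl.
    + unfold rdot; simpl. pose proof (sin2_cos2 th12). fold s2 c2 in H. unfold Rsqr in H.
      transitivity ((s2 * s2 + c2 * c2) * (x * x + y * y)); [ring|]. rewrite H, Hd1. ring.
    + rewrite <- (Dn0 X2 t). change (T2 0%nat t = 0%C). rewrite kT2 by auto.
      unfold T2, ch. rewrite Dn0, <- Hi1, rotA. fold p q. rewrite Hp, Hq. ring.
    + rewrite <- (Dn0 X2 t). change (N2 0%nat t = 0%C).
      apply (fourth_zero N2 a b s cN2 Hab2 Habs oN2); auto.
      intros j Hj. destruct j as [|[|[|[|j]]]]; [| | | |lia].
      * rewrite eN20, Hp, Hq. ring.
      * rewrite eN21. auto.
      * auto.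
      * auto.
  - apply (vec_zero (X3 t) (c3 * x - s3 * y, s3 * x + c3 * y)); simpl.
    + unfold rdot; simpl. pose proof (sin2_cos2 th13). fold s3 c3 in H. unfold Rsqr in H.
      transitivity ((s3 * s3 + c3 * c3) * (x * x + y * y)); [ring|]. rewrite H, Hd1. ring.
    + rewrite <- (Dn0 X3 t). change (T3 0%nat t = 0%C). rewrite kT3 by auto.
      unfold T3, ch. rewrite Dn0, <- Hi2, <- Hi1, rotC. fold p q. rewrite Hp, Hq. ring.
    + rewrite <- (Dn0 X3 t). change (N3 0%nat t = 0%C).
      apply (fourth_zero N3 a b s cN3 Hab2 Habs oN3); auto.
      intros j Hj. destruct j as [|[|[|[|j]]]]; [| | | |lia].
      * rewrite eN30, Hp, Hq. ring.
      * rewrite eN31. auto.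
      * rewrite HW2, HV2. ring.
      * rewrite HW3. auto.
Qed.
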